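(* Let $G$ be a graph with a length-function $\ell$. The set of cycles of $G$ that are fully geodesic in $G$ generates the cycle space of $G$ (over $\mathbb{F}_2$).
   Context: All graphs are finite; parallel edges are allowed, loops are not; a cycle may consist of two vertices joined by two parallel edges. A length-function on a graph $G$ is a map $\ell:E(G)\to\mathbb{R}^+$ (strictly positive reals); $\ell(H)=\sum_{e\in E(H)}\ell(e)$ for subgraphs $H$, which carry the restricted length-function. $\mathrm{sd}_G(A)$ is the minimum of $\ell(S)$ over connected subgraphs $S\subseteq G$ with $A\subseteq V(S)$ ($\infty$ if none). $H\subseteq G$ is $k$-geodesic in $G$ if $\mathrm{sd}_H(A)=\mathrm{sd}_G(A)$ for all $A\subseteq V(H)$ with $|A|\le k$, and fully geodesic if it is $k$-geodesic for every $k\in\mathbb{N}$. The cycle space of $G$ is the $\mathbb{F}_2$-vector space of edge sets of $G$ in which every vertex has even degree, with symmetric difference as addition. *)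

(* Defs.v *)
From HB Require Import structures.
From mathcomp Require Import all_boot all_order all_algebra.
Set Implicit Arguments. Unset Strict Implicit. Unset Printing Implicit Defensive.
Import Order.TTheory GRing.Theory Num.Theory.

(* A finite multigraph (parallel edges allowed) is given by a finite vertex
   type V, a finite edge type E and endpoint maps src tgt : E -> V; loops are
   excluded by the hypothesis [forall e, src e != tgt e] in the theorem.
   Edges are undirected: src/tgt merely name the two ends. *)

Section Graphs.
Variables (V E : finType) (src tgt : E -> V).

Definition incident (e : E) (v : V) : bool := (src e == v) || (tgt e == v).

Definition is_subgraph (VS : {set V}) (ES : {set E}) : bool :=
  [forall e in ES, (src e \in VS) && (tgt e \in VS)].

Definition adj (ES : {set E}) : rel V :=
  fun u v => [exists e in ES,
    ((src e == u) && (tgt e == v)) || ((src e == v) && (tgt e == u))].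

Definition connected_sub (VS : {set V}) (ES : {set E}) : bool :=
  (VS != set0) && [forall u in VS, forall v in VS, connect (adj ES) u v].

(* degree of v in the edge set ES (no loops, so each incident edge counts once) *)
Definition deg (ES : {set E}) (v : V) : nat := #|[set e in ES | incident e v]|.

(* a cycle: connected, every vertex has degree 2
   (with no loops this is exactly a cycle; two parallel edges form a cycle) *)
Definition is_cycle (VS : {set V}) (ES : {set E}) : bool :=
  [&& is_subgraph VS ES, connected_sub VS ES & [forall v in VS, deg ES v == 2]].

Definition in_cycle_space (F : {set E}) : bool := [forall v, ~~ odd (deg F v)].

Definition symdiff (A B : {set E}) : {set E} := (A :\: B) :|: (B :\: A).

Definition F2sum (s : seq {set E}) : {set E} := foldr symdiff set0 s.

Variable (R : realFieldType) (len : E -> R).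

Definition glen (ES : {set E}) : R := (\sum_(e in ES) len e)%R.

Definition omin (x y : option R) : option R :=
  match x, y with
  | Some a, Some b => Some (Order.min a b)
  | None, _ => y
  | _, None => x
  end.

(* sd_H(A) for H = (VS, ES): minimum length of a connected subgraph S of H
   with A included in V(S); None stands for infinity. *)
Definition sd (VS : {set V}) (ES : {set E}) (A : {set V}) : option R :=
  foldr omin None
    [seq Some (glen X.2) | X <- enum [set X : {set V} * {set E} |
        [&& X.1 \subset VS, X.2 \subset ES, is_subgraph X.1 X.2,
            connected_sub X.1 X.2 & A \subset X.1]]].

Definition k_geodesic (k : nat) (VS : {set V}) (ES : {set E}) : Prop :=
  forall A : {set V}, A \subset VS -> #|A| <= k ->
    sd VS ES A = sd [set: V] [set: E] A.

Definition fully_geodesic (VS : {set V}) (ES : {set E}) : Prop :=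
  forall k, k_geodesic k VS ES.

End Graphs.

(* Main.v *)
Require Import Defs.
From HB Require Import structures.
From mathcomp Require Import all_boot all_order all_algebra.
From mathcomp Require Import zify.
From Stdlib Require Import Classical.
Import Order.TTheory GRing.Theory Num.Theory.
Set Implicit Arguments. Unset Strict Implicit. Unset Printing Implicit Defensive.

Section Proof7.
Variables (V E : finType) (src tgt : E -> V).
Hypothesis noloop : forall e, src e != tgt e.

Definition par (F : {set E}) v := odd (deg src tgt F v).
Definition evenS (F : {set E}) := forall v, ~~ par F v.

Lemma in_symdiff (A B : {set E}) x : (x \in symdiff A B) = (x \in A) (+) (x \in B).
Proof. by rewrite /symdiff !inE; case: (x \in A); case: (x \in B). Qed.

Lemma symdiffA (A B C : {set E}) : symdiff A (symdiff B C) = symdiff (symdiff A B) C.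
Proof. by apply/setP=> x; rewrite !in_symdiff addbA. Qed.

Lemma symdiffC (A B : {set E}) : symdiff A B = symdiff B A.
Proof. by apply/setP=> x; rewrite !in_symdiff addbC. Qed.

Lemma symdiff0 (A : {set E}) : symdiff A set0 = A.
Proof. by apply/setP=> x; rewrite !in_symdiff inE addbF. Qed.

Lemma symdiffvv (A : {set E}) : symdiff A A = set0.
Proof. by apply/setP=> x; rewrite !in_symdiff inE addbb. Qed.

Lemma F2sum_cat (s1 s2 : seq {set E}) : F2sum (s1 ++ s2) = symdiff (F2sum s1) (F2sum s2).
Proof.
elim: s1 => [|A s IH] /=; first by rewrite symdiffC symdiff0.
by rewrite IH symdiffA.
Qed.

Lemma odd_card_symdiff (A B : {set E}) : odd #|symdiff A B| = odd #|A| (+) odd #|B|.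
Proof.
have HU : #|symdiff A B| = #|A :\: B| + #|B :\: A|.
  rewrite /symdiff cardsU.
  have -> : (A :\: B) :&: (B :\: A) = set0.
    by apply/setP=> x; rewrite !inE; case: (x \in A); case: (x \in B).
  by rewrite cards0 subn0.
have H1 := cardsID B A; have H2 := cardsID A B.
rewrite setIC in H2; rewrite HU -H1 -H2 !oddD.
by case: (odd #|A :&: B|); case: (odd #|A :\: B|); case: (odd #|B :\: A|).
Qed.

Lemma par_symdiff (A B : {set E}) v : par (symdiff A B) v = par A v (+) par B v.
Proof.
rewrite /par /deg -odd_card_symdiff.
have -> : [set e in symdiff A B | incident src tgt e v] =
  symdiff [set e in A | incident src tgt e v] [set e in B | incident src tgt e v] => //.
by apply/setP=> x; rewrite !inE; case: (x \in A); case: (x \in B); case: incident.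
Qed.

Lemma incidentE e w : incident src tgt e w = (src e == w) (+) (tgt e == w).
Proof.
rewrite /incident; have := noloop e.
by case: (eqVneq (src e) w) => [<-|_]; case: (eqVneq (tgt e) (src e)).
Qed.

Lemma par1 e w : par [set e] w = incident src tgt e w.
Proof.
rewrite /par /deg; case H: (incident src tgt e w).
  have -> : [set f in [set e] | incident src tgt f w] = [set e].
    by apply/setP=> x; rewrite !inE; case: eqP => // ->; rewrite H.
  by rewrite cards1.
have -> : [set f in [set e] | incident src tgt f w] = set0.
  by apply/setP=> x; rewrite !inE; case: eqP => // ->; rewrite H.
by rewrite cards0.
Qed.

Lemma par0 v : par set0 v = false.
Proof.
rewrite /par /deg; have -> : [set f in (set0 : {set E}) | incident src tgt f v] = set0.
  by apply/setP=> x; rewrite !inE.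
by rewrite cards0.
Qed.

Lemma evenS0 : evenS set0.
Proof. by move=> v; rewrite par0. Qed.

Lemma evenS_symdiff A B : evenS A -> evenS B -> evenS (symdiff A B).
Proof. by move=> HA HB v; rewrite par_symdiff (negbTE (HA v)) (negbTE (HB v)). Qed.

Lemma evenS_F2sum (s : seq {set E}) : (forall A, A \in s -> evenS A) -> evenS (F2sum s).
Proof.
elim: s => [|A s IH] /= H; first exact: evenS0.
apply: evenS_symdiff; first by apply: H; rewrite inE eqxx.
by apply: IH => B HB; apply: H; rewrite inE HB orbT.
Qed.

Lemma evenS_cs F : evenS F <-> in_cycle_space src tgt F.
Proof.
split=> H; first by apply/forallP=> v; apply: H.
by move=> v; move/forallP: H; apply.
Qed.

Variables (R : realFieldType) (len : E -> R).
Hypothesis len_pos : forall e, (0 < len e)%R.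
Local Open Scope ring_scope.

Lemma glen_ge0 (A : {set E}) : 0 <= glen len A.
Proof. by apply: sumr_ge0 => i _; apply: ltW. Qed.

Lemma glen_split (A B : {set E}) : A \subset B -> glen len B = glen len A + glen len (B :\: A).
Proof. by move=> HAB; rewrite /glen (big_setID A) /= (setIidPr HAB). Qed.

Lemma glen_sub (A B : {set E}) : A \subset B -> glen len A <= glen len B.
Proof. by move=> H; rewrite (glen_split H) lerDl glen_ge0. Qed.

Lemma glen_gt0 (A : {set E}) : A != set0 -> 0 < glen len A.
Proof.
case/set0Pn=> x Hx; rewrite (glen_split (_ : [set x] \subset A)); last by rewrite sub1set.
by rewrite /glen big_set1 ltr_wpDr // glen_ge0.
Qed.

Lemma glen_symdiff (A B : {set E}) : glen len (symdiff A B) <= glen len A + glen len B.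
Proof.
apply: (@le_trans _ _ (glen len (A :|: B))).
  by apply: glen_sub; apply/subsetP=> x; rewrite in_symdiff !inE; case: (x \in A).
rewrite (glen_split (subsetUl A B)) lerD2l; apply: glen_sub.
by apply/subsetP=> x; rewrite !inE; case: (x \in A); case: (x \in B).
Qed.


Section Fold.
Variables (T : eqType) (f : T -> R).
Definition fo (l : seq T) := foldr (@omin R) None [seq Some (f x) | x <- l].

Lemma fo_min l x : x \in l -> exists y, fo l = Some y /\ y <= f x.
Proof.
elim: l => [|a l IH] //; rewrite inE; case/orP => [/eqP ->|Hx].
  rewrite /fo /= -/(fo l); case: (fo l) => [b|]; last by exists (f a).
  by exists (Order.min (f a) b); split => //; rewrite ge_min lexx.
have [y [Hy Hyx]] := IH Hx; rewrite /fo /= -/(fo l) Hy.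
by exists (Order.min (f a) y); split => //; rewrite ge_min Hyx orbT.
Qed.

Lemma fo_some l y : fo l = Some y -> exists2 x, x \in l & y = f x.
Proof.
elim: l y => [|a l IH] y //=; rewrite /fo /= -/(fo l).
case H: (fo l) => [b|] /=; last by case=> <-; exists a => //; rewrite inE eqxx.
case=> <-; rewrite minEle; case: ifP => _; first by exists a => //; rewrite inE eqxx.
by have [x Hx ->] := IH _ H; exists x => //; rewrite inE Hx orbT.
Qed.
End Fold.

Definition sdset (VS : {set V}) (ES : {set E}) (A : {set V}) :=
  [set X : {set V} * {set E} |
        [&& X.1 \subset VS, X.2 \subset ES, is_subgraph src tgt X.1 X.2,
            connected_sub src tgt X.1 X.2 & A \subset X.1]].

Lemma sdE VS ES A : sd src tgt len VS ES A = fo (fun X : {set V} * {set E} => glen len X.2) (enum (sdset VS ES A)).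
Proof. by []. Qed.

Lemma sd_min VS ES A X : X \in sdset VS ES A ->
  exists y, sd src tgt len VS ES A = Some y /\ y <= glen len X.2.
Proof. by move=> HX; rewrite sdE; apply: fo_min; rewrite mem_enum. Qed.

Lemma sd_some VS ES A y : sd src tgt len VS ES A = Some y ->
  exists2 X, X \in sdset VS ES A & y = glen len X.2.
Proof.
rewrite sdE => /fo_some [X HX ->]; exists X => //.
by rewrite -mem_enum.
Qed.


Lemma not_geo VS ES : is_subgraph src tgt VS ES -> connected_sub src tgt VS ES ->
  ~ fully_geodesic src tgt len VS ES ->
  exists (A : {set V}) (SV : {set V}) (SE : {set E}), [/\ A \subset VS, is_subgraph src tgt SV SE, connected_sub src tgt SV SE,
    A \subset SV &
    (forall (X1 : {set V}) (X2 : {set E}), X1 \subset VS -> X2 \subset ES -> is_subgraph src tgt X1 X2 ->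
       connected_sub src tgt X1 X2 -> A \subset X1 -> glen len SE < glen len X2)].
Proof.
move=> Hsub Hcon Hng.
have [k Hk] := not_all_ex_not _ _ Hng.
have [A HA] := not_all_ex_not _ _ Hk.
have [HAV HA2] := imply_to_and _ _ HA.
have [_ Hne] := imply_to_and _ _ HA2.
have HC : (VS, ES) \in sdset VS ES A by rewrite inE /= !subxx Hsub Hcon HAV.
have [c [Hc _]] := sd_min HC.
have [Y HY Yc] := sd_some Hc.
have HYG : Y \in sdset [set: V] [set: E] A.
  by move: HY; rewrite !inE => /and5P [_ _ -> -> ->]; rewrite !subsetT.
have [g [Hg Hgc]] := sd_min HYG.
have [X HX Xg] := sd_some Hg.
exists A, X.1, X.2; move: HX; rewrite inE => /and5P [_ _ HXs HXc HXA]; split => //.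
move=> X1 X2 H1 H2 H3 H4 H5.
have HX12 : (X1, X2) \in sdset VS ES A by rewrite inE /= H1 H2 H3 H4 H5.
have [c' [Hc' Hc'le]] := sd_min HX12.
rewrite Hc in Hc'; case: Hc' => Hcc; subst c'.
rewrite -Xg; apply: (lt_le_trans _ Hc'le).
rewrite lt_neqAle (_ : g <= c) ?andbT; last by rewrite Yc.
apply/eqP => Hgc2; apply: Hne.
by rewrite Hc Hg Hgc2.
Qed.


Local Open Scope nat_scope.
Definition joins (e : E) (x y : V) :=
  (src e == x) && (tgt e == y) || (src e == y) && (tgt e == x).

Lemma adjE (X : {set E}) u v : adj src tgt X u v = [exists e in X, joins e u v].
Proof. by []. Qed.

Lemma adj_sym (X : {set E}) : symmetric (adj src tgt X).
Proof.
move=> u v; rewrite !adjE; apply/existsP/existsP => [] [e He]; exists e;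
  by move: He; rewrite /joins orbC.
Qed.

Lemma joins_inc e x y w : joins e x y -> incident src tgt e w = (x == w) (+) (y == w).
Proof.
rewrite incidentE /joins; case/orP => /andP [/eqP -> /eqP ->] //.
by rewrite addbC.
Qed.

Lemma joins_ne e x y : joins e x y -> x != y.
Proof.
rewrite /joins; case/orP => /andP [/eqP <- /eqP <-]; first exact: noloop.
by rewrite eq_sym; exact: noloop.
Qed.

Lemma mod_win n i j : 0 < n -> i < j -> j < i + n -> (j == i %[mod n]) = false.
Proof.
move=> Hn Hij Hjn; rewrite eqn_mod_dvd; last exact: ltnW.
apply/negP => /dvdn_leq; rewrite subn_gt0 => /(_ Hij); lia.
Qed.

Lemma wrep n b j : 0 < n -> exists i, b <= i < b + n /\ (i == j %[mod n]).
Proof.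
move=> Hn; have Hb := divn_eq b n; have Hr := ltn_pmod b Hn; have Hs := ltn_pmod j Hn.
set q := b %/ n in Hb; set r := b %% n in Hb Hr; set s := j %% n in Hs.
case: (leqP r s) => Hrs.
  exists (q * n + s); split; first by rewrite Hb; apply/andP; split; lia.
  by rewrite modnMDl /s modn_mod.
exists (q.+1 * n + s); split; first by rewrite Hb mulSn; apply/andP; split; lia.
by rewrite modnMDl /s modn_mod.
Qed.

Lemma path_Q (ES : {set E}) y x : connect (adj src tgt ES) y x ->
  exists Q : {set E}, Q \subset ES /\ forall w, par Q w = (y == w) (+) (x == w).
Proof.
move/connectP => [p Hp ->]; elim: p y Hp => [|z p IH] y /=.
  by move=> _; exists set0; split; [exact: sub0set | move=> w; rewrite par0 addbb].
case/andP => Hyz Hp; have [Q [HQ HQp]] := IH z Hp.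
move: Hyz; rewrite adjE => /existsP [f /andP [Hf Hj]].
exists (symdiff [set f] Q); split.
  apply/subsetP => e; rewrite in_symdiff inE.
  case: (eqVneq e f) => [->|_] //= He; exact: (subsetP HQ).
move=> w; rewrite par_symdiff par1 (joins_inc _ Hj) HQp.
by case: (y == w); case: (z == w); case: (last z p == w).
Qed.

Lemma odd_card_xor (T : finType) (A : {set T}) (P : pred T) :
  odd #|[set x in A | P x]| = \big[addb/false]_(x in A) P x.
Proof.
rewrite -sum1dep_card big_mkcondr (big_morph odd oddD (erefl : odd 0 = false)).
by apply: eq_bigr => x _; case: (P x).
Qed.

Lemma xor_eq (K : {set V}) a : \big[addb/false]_(w in K) (a == w) = (a \in K).
Proof.
case: (boolP (a \in K)) => Ha.
  rewrite (bigD1 a) //= eqxx big1 // => w /andP [_ Hw].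
  by rewrite eq_sym (negbTE Hw).
by apply: big1 => w Hw; apply/eqP => Haw; move: Ha; rewrite Haw Hw.
Qed.

Lemma par_xor F w : par F w = \big[addb/false]_(f in F) incident src tgt f w.
Proof. exact: odd_card_xor. Qed.

Lemma even_connect F e : evenS F -> e \in F -> connect (adj src tgt (F :\ e)) (src e) (tgt e).
Proof.
move=> HF He; set F' := F :\ e; set u := src e; set v := tgt e.
apply/negPn/negP => Hnc.
set K := [set w | connect (adj src tgt F') u w].
have HvK : v \notin K by rewrite inE.
have HuK : u \in K by rewrite inE connect0.
have HF' : F' = symdiff F [set e].
  apply/setP => x; rewrite in_symdiff !inE.
  by case: (eqVneq x e) => [->|Hx] /=; rewrite ?eqxx ?He ?addbF.
have Hclosed : forall f, f \in F' -> (src f \in K) = (tgt f \in K).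
  move=> f Hf; rewrite !inE; apply/idP/idP => H; apply: (connect_trans H); apply: connect1;
    rewrite adjE; apply/existsP; exists f; by rewrite Hf /joins !eqxx ?orbT.
have H1 : \big[addb/false]_(w in K) par F' w = true.
  rewrite -HuK -xor_eq; apply: eq_bigr => w Hw.
  rewrite HF' par_symdiff (negbTE (HF w)) par1 incidentE.
  have -> : (tgt e == w) = false by apply/eqP => Hvw; move: HvK; rewrite /v Hvw Hw.
  by rewrite addbF.
have H2 : \big[addb/false]_(w in K) par F' w = false.
  under eq_bigr do rewrite par_xor.
  rewrite exchange_big /=; apply: big1 => f Hf.
  under eq_bigr do rewrite incidentE.
  by rewrite big_split /= !xor_eq Hclosed // addbb.
by rewrite H1 in H2.
Qed.

Lemma joins_inj f x y x' y' : joins f x y -> joins f x' y' ->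
  (x = x' /\ y = y') \/ (x = y' /\ y = x').
Proof.
rewrite /joins; case/orP => /andP [/eqP <- /eqP <-]; case/orP => /andP [/eqP <- /eqP <-]; auto.
Qed.

Section CycleRep.
Variables (n : nat) (vf : nat -> V) (gf : nat -> E).
Hypotheses (Hn : 1 < n) (Hv : forall i j, (vf i == vf j) = (i == j %[mod n]))
  (Hg : forall i j, (gf i == gf j) = (i == j %[mod n]))
  (Hj : forall i, joins (gf i) (vf i) (vf i.+1)).

Definition VC := [set vf i | i : 'I_n].
Definition CE := [set gf i | i : 'I_n].
Definition W p m := [set e | [exists i : 'I_m, (p <= i) && (gf i == e)]].

Lemma Hn0 : 0 < n. Proof. exact: ltnW. Qed.

Lemma vf_modeq i j : i = j %[mod n] -> vf i = vf j.
Proof. by move=> H; apply/eqP; rewrite Hv H. Qed.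
Lemma gf_modeq i j : i = j %[mod n] -> gf i = gf j.
Proof. by move=> H; apply/eqP; rewrite Hg H. Qed.

Lemma in_VC x : reflect (exists i, x = vf i) (x \in VC).
Proof.
apply: (iffP imsetP) => [[i _ ->]|[i ->]]; first by exists i.
exists (Ordinal (ltn_pmod i Hn0)) => //=; apply: vf_modeq; by rewrite modn_mod.
Qed.

Lemma in_CE x : reflect (exists i, x = gf i) (x \in CE).
Proof.
apply: (iffP imsetP) => [[i _ ->]|[i ->]]; first by exists i.
exists (Ordinal (ltn_pmod i Hn0)) => //=; apply: gf_modeq; by rewrite modn_mod.
Qed.

Lemma gf_in i : gf i \in CE. Proof. by apply/in_CE; exists i. Qed.
Lemma vf_in i : vf i \in VC. Proof. by apply/in_VC; exists i. Qed.

Lemma in_W p m e : reflect (exists i, p <= i < m /\ gf i = e) (e \in W p m).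
Proof.
rewrite inE; apply: (iffP existsP) => [[i /andP [H1 /eqP H2]]|[i [/andP [H1 H2] H3]]].
  by exists i; rewrite H1 ltn_ord H2.
by exists (Ordinal H2); rewrite /= H1 H3 eqxx.
Qed.

Lemma W_sub p m : W p m \subset CE.
Proof. by apply/subsetP => e /in_W [i [_ <-]]; apply: gf_in. Qed.

Lemma W_nil p : W p p = set0.
Proof. by apply/setP => e; rewrite [RHS]inE; apply/negP => /in_W [i [/andP [H1 H2] _]]; lia. Qed.

Lemma W_S p m : p <= m -> m < p + n -> W p m.+1 = symdiff (W p m) [set gf m].
Proof.
move=> H1 H2; apply/setP => e; rewrite in_symdiff inE.
case: (eqVneq e (gf m)) => [->|He].
  have -> : gf m \in W p m.+1 by apply/in_W; exists m; rewrite H1 leqnn.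
  case: (in_W p m (gf m)) => // [[i [/andP [Hi1 Hi2] /eqP]]].
  rewrite Hg eq_sym mod_win //; [exact: Hn0 | lia].
rewrite addbF; apply/in_W/in_W; case => i [/andP [Hi1 Hi2] Hi]; exists i; split => //.
  apply/andP; split => //; rewrite ltn_neqAle -ltnS Hi2 andbT.
  by apply/eqP => Him; move: He; rewrite -Hi Him eqxx.
by apply/andP; split => //; lia.
Qed.

Lemma inc_gf j w : incident src tgt (gf j) w = (vf j == w) (+) (vf j.+1 == w).
Proof. exact: joins_inc (Hj j). Qed.

Lemma W_par p k w : k <= n -> par (W p (p + k)) w = (vf p == w) (+) (vf (p + k) == w).
Proof.
elim: k => [|k IH] Hk; first by rewrite addn0 W_nil par0 addbb.
rewrite addnS W_S ?leq_addr //; last by rewrite ltn_add2l.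
rewrite par_symdiff IH ?(ltnW Hk) // par1 inc_gf.
by case: (vf p == w); case: (vf (p + k) == w); case: (vf (p + k).+1 == w).
Qed.

Lemma W_full b : W b (b + n) = CE.
Proof.
apply/eqP; rewrite eqEsubset W_sub /=; apply/subsetP => e /in_CE [j ->].
have [i [Hi Hij]] := wrep b j Hn0.
by apply/in_W; exists i; split => //; apply: gf_modeq; apply/eqP.
Qed.

Lemma W_split p q m : p <= q -> q <= m -> m <= p + n -> W p m = symdiff (W p q) (W q m).
Proof.
move=> H1 H2 H3; apply/setP => e; rewrite in_symdiff.
case: (in_W p q e) => [[i [Hi <-]]|Hpq].
  have -> : gf i \in W p m by apply/in_W; exists i; split => //; lia.
  case: (in_W q m (gf i)) => // [[j [Hj2 /eqP]]].
  rewrite Hg mod_win //; [exact: Hn0 | lia | lia].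
case: (in_W p m e) => [[i [Hi Hie]]|Hpm].
  have Hiq : q <= i.
    by case: (ltnP i q) => // Hiq; exfalso; apply: Hpq; exists i; split => //; lia.
  suff -> : e \in W q m by [].
  by apply/in_W; exists i; split => //; lia.
case: (in_W q m e) => // [[i [Hi Hie]]]; exfalso; apply: Hpm; exists i; split => //; lia.
Qed.

Lemma CE_even : evenS CE.
Proof.
move=> w; rewrite -(W_full 0) add0n (W_par 0 w (leqnn n)) add0n.
by rewrite (vf_modeq (_ : n = 0 %[mod n])) ?addbb // modnn mod0n.
Qed.

Lemma walk (X : {set E}) i k : (forall t, i <= t < i + k -> gf t \in X) ->
  connect (adj src tgt X) (vf i) (vf (i + k)).
Proof.
elim: k => [|k IH] H; first by rewrite addn0 connect0.
apply: (connect_trans (IH _)); first by move=> t Ht; apply: H; lia.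
rewrite addnS; apply: connect1; rewrite adjE; apply/existsP; exists (gf (i + k)).
by rewrite Hj andbT; apply: H; lia.
Qed.

Lemma cycle_is : is_cycle src tgt VC CE.
Proof.
apply/and3P; split.
- apply/forallP => e; apply/implyP => /in_CE [i ->].
  by move: (Hj i); rewrite /joins; case/orP => /andP [/eqP -> /eqP ->]; rewrite !vf_in.
- apply/andP; split; first by apply/set0Pn; exists (vf 0); apply: vf_in.
  have H0 : forall i, connect (adj src tgt CE) (vf 0) (vf i).
    by move=> i; rewrite -[i]add0n; apply: walk => t _; apply: gf_in.
  apply/forallP => u; apply/implyP => /in_VC [i ->].
  apply/forallP => v; apply/implyP => /in_VC [j ->].
  apply: (connect_trans _ (H0 j)).
  by rewrite (sym_connect_sym (@adj_sym CE)) H0.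
- apply/forallP => w; apply/implyP => /in_VC [i ->]. rewrite /deg.
  have -> : [set e in CE | incident src tgt e (vf i)] = [set gf i; gf (i + n).-1].
    apply/setP => e; rewrite !inE; apply/andP/orP.
      case => /in_CE [j ->]; rewrite inc_gf !Hv !Hg => Hx.
      case Hji: (j == i %[mod n]); first by left.
      right; move: Hx; rewrite Hji /= => Hj1.
      rewrite -(eqn_modDr 1) !addn1 prednK; last by lia.
      by rewrite (eqP Hj1) modnDr.
    case => /eqP ->; rewrite gf_in /= inc_gf !Hv.
      by rewrite eqxx (@mod_win n i i.+1) //; [exact: Hn0 | lia].
    rewrite prednK; last by lia.
    by rewrite modnDr eqxx (@mod_win n i (i + n).-1) //; [exact: Hn0 | lia | lia].
  by rewrite cards2 Hg [i %% n == _]eq_sym (@mod_win n i (i + n).-1) //; [exact: Hn0 | lia | lia].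
Qed.


Section Decomp.
Variables (A SV : {set V}) (SE : {set E}).
Hypotheses (HAV : A \subset VC) (HSs : is_subgraph src tgt SV SE)
  (HSc : connected_sub src tgt SV SE) (HAS : A \subset SV)
  (Hsmall : forall (X1 : {set V}) (X2 : {set E}), X1 \subset VC -> X2 \subset CE ->
     is_subgraph src tgt X1 X2 -> connected_sub src tgt X1 X2 -> A \subset X1 ->
     (glen len SE < glen len X2)%R).

Lemma arc_short p m : p < m -> m <= p + n ->
  (forall t, p < t < m -> vf t \notin A) ->
  (glen len (W p m) + glen len SE < glen len CE)%R.
Proof.
move=> Hpm Hmn Hint.
set X2 := CE :\: W p m.
set X1 := [set x in VC | ~~ [exists t : 'I_m, (p < t) && (vf t == x)]].
have HWs := W_sub p m.
have Hnotint : forall t, p < t < m -> vf t \notin X1.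
  move=> t /andP [H1 H2]; rewrite inE negb_and negbK; apply/orP; right.
  by apply/existsP; exists (Ordinal H2); rewrite /= H1 eqxx.
have HX1 : forall j, vf j \notin X1 -> exists2 t, p < t < m & vf t = vf j.
  move=> j; rewrite inE vf_in /= negbK => /existsP [t /andP [H1 /eqP H2]].
  by exists t => //; rewrite H1 ltn_ord.
have HX2 : forall j, gf j \in X2 -> (vf j \in X1) && (vf j.+1 \in X1).
  move=> j; rewrite inE gf_in andbT => HjW.
  apply/andP; split; apply/negPn/negP => /HX1 [t /andP [H1 H2] Ht]; move/negP: HjW; apply.
    apply/in_W; exists t; split; first by apply/andP; split; lia.
    by apply: gf_modeq; apply/eqP; rewrite -Hv Ht.
  apply/in_W; exists t.-1; split; first by apply/andP; split; lia.
  apply: gf_modeq; apply/eqP; rewrite -(eqn_modDr 1) !addn1 prednK; last by lia.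
  by rewrite -Hv Ht.
have Hsub1 : X1 \subset VC by apply/subsetP => x; rewrite inE => /andP [].
have Hsub2 : X2 \subset CE by apply: subsetDl.
have Hsg : is_subgraph src tgt X1 X2.
  apply/forallP => e; apply/implyP => He.
  have := He; rewrite inE => /andP [_ /in_CE [j Hej]]; subst e.
  case/andP: (HX2 j He) => H1 H2.
  by move: (Hj j); rewrite /joins; case/orP => /andP [/eqP -> /eqP ->]; rewrite H1 H2.
have HA1 : A \subset X1.
  apply/subsetP => a Ha; apply/negPn/negP => Hna.
  have := subsetP HAV a Ha => /in_VC [j Hj']; subst a.
  have [t Ht Htj] := HX1 j Hna.
  by move: (Hint t Ht); rewrite Htj Ha.
have Hp1 : vf p \in X1.
  apply/negPn/negP => /HX1 [t /andP [H1 H2] /eqP]; rewrite Hv mod_win //; first exact: Hn0.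
  lia.
have Hconn : forall x, x \in X1 -> connect (adj src tgt X2) x (vf (p + n)).
  move=> x Hx; have := subsetP Hsub1 x Hx => /in_VC [j Hxj]; subst x.
  have [i [Hi Hij]] := wrep p j Hn0.
  rewrite -(vf_modeq (eqP Hij)) in Hx *; clear Hij.
  case: (ltnP p i) => Hpi; last first.
    have -> : i = p by clear -Hi Hpi; lia.
    by rewrite (vf_modeq (_ : p + n = p %[mod n])) ?modnDr // connect0.
  case: (ltnP i m) => Him.
    by move: Hx; rewrite (negbTE (Hnotint i _)) //; apply/andP.
  have -> : p + n = i + (p + n - i) by clear -Hi; lia.
  apply: walk => t Ht; rewrite inE gf_in andbT; apply/negP => /in_W [s [Hs /eqP]].
  rewrite Hg eq_sym (@mod_win n s t) //; first exact: Hn0.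
    by clear -Hs Ht Him; lia.
  by clear -Hs Ht Hmn; lia.
have Hc : connected_sub src tgt X1 X2.
  apply/andP; split; first by apply/set0Pn; exists (vf p).
  apply/forallP => u; apply/implyP => Hu; apply/forallP => v; apply/implyP => Hv'.
  apply: (connect_trans (Hconn u Hu)).
  by rewrite (sym_connect_sym (@adj_sym X2)) Hconn.
have := Hsmall Hsub1 Hsub2 Hsg Hc HA1.
by move=> H; rewrite (glen_split HWs) ltrD2l.
Qed.


Definition good (Ds : seq {set E}) :=
  forall D, D \in Ds -> evenS D /\ (glen len D < glen len CE)%R.

Lemma cycle_decomp : exists Ds, good Ds /\ CE = F2sum Ds.
Proof.
have [b Hb] : exists b, vf b \in A.
  case: (set_0Vmem A) => [HA0|[a Ha]]; last first.
    by have := subsetP HAV a Ha => /in_VC [j Hj']; exists j; rewrite -Hj'.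
  exfalso.
  have H0 : is_subgraph src tgt [set vf 0] set0 by apply/forallP => e; rewrite in_set0.
  have H1 : connected_sub src tgt [set vf 0] set0.
    apply/andP; split; first by apply/set0Pn; exists (vf 0); rewrite inE.
    apply/forallP => u; apply/implyP; rewrite inE => /eqP ->.
    by apply/forallP => v; apply/implyP; rewrite inE => /eqP ->; apply: connect0.
  have Hc : (glen len SE < glen len set0)%R.
    apply: (Hsmall _ _ H0 H1 _); [by rewrite sub1set vf_in | exact: sub0set | by rewrite HA0 sub0set].
  by move: Hc; rewrite /glen big_set0 ltNge glen_ge0.
set r := vf b.
have HrS : r \in SV by apply: (subsetP HAS).
have [Rf HRf] : exists Rf : V -> {set E}, forall x, x \in SV ->
    Rf x \subset SE /\ forall w, par (Rf x) w = (r == w) (+) (x == w).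
  apply: (@fin_all_exists _ (fun _ => {set E})
    (fun x Q => x \in SV -> Q \subset SE /\ forall w, par Q w = (r == w) (+) (x == w))).
  move=> x; case: (boolP (x \in SV)) => Hx; last by exists set0.
  have := HSc => /andP [_ /forallP /(_ r) /implyP /(_ HrS) /forallP /(_ x) /implyP /(_ Hx)].
  by move/path_Q => [Q HQ]; exists Q.
have Inv : forall k, k <= n -> exists p, [/\ b <= p <= b + k, vf p \in A,
    (forall t, p < t <= b + k -> vf t \notin A) &
    exists Ds, good Ds /\ F2sum Ds = symdiff (symdiff (W b p) (Rf r)) (Rf (vf p))].
  elim => [|k IH] Hk.
    exists b; split => //; first by rewrite addn0 leqnn.
      by move=> t; rewrite addn0 => /andP [H1 H2]; exfalso; clear -H1 H2; lia.
    exists [::]; split => //=.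
    by rewrite W_nil [symdiff set0 _]symdiffC symdiff0 -/r symdiffvv.
  have [p [Hp HpA Hpt [Ds [HDs HF]]]] := IH (ltnW Hk).
  case: (boolP (vf (b + k.+1) \in A)) => HA'; last first.
    exists p; split => //; first by clear -Hp; lia.
      move=> t /andP [H1 H2]; case: (ltnP (b + k) t) => H3.
        by have -> : t = b + k.+1 by clear -H2 H3; lia.
      by apply: Hpt; apply/andP.
    by exists Ds.
  set p' := b + k.+1.
  have Hpp' : p < p' by rewrite /p'; clear -Hp; lia.
  have Hp'n : p' <= p + n by rewrite /p'; clear -Hp Hk; lia.
  have HpS : vf p \in SV by apply: (subsetP HAS).
  have Hp'S : vf p' \in SV by apply: (subsetP HAS).
  have [HRp HRpp] := HRf _ HpS.
  have [HRp' HRp'p] := HRf _ Hp'S.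
  exists p'; split => //; first by rewrite /p'; clear; lia.
    by move=> t /andP [H1 H2]; exfalso; clear -H1 H2; lia.
  exists ((symdiff (symdiff (W p p') (Rf (vf p))) (Rf (vf p'))) :: Ds); split.
    move=> D; rewrite inE => /orP [/eqP ->|]; last exact: HDs.
    split.
      move=> w; rewrite !par_symdiff HRpp HRp'p.
      have -> : p' = p + (p' - p) by rewrite subnKC // ltnW.
      rewrite W_par; last by clear -Hp'n; lia.
      by case: (vf p == w); case: (r == w); case: (vf (p + (p' - p)) == w).
    rewrite -symdiffA; apply: (le_lt_trans (glen_symdiff _ _)).
    apply: (le_lt_trans _ (@arc_short p p' Hpp' Hp'n _)).
      rewrite lerD2l; apply: glen_sub; apply/subsetP => e; rewrite in_symdiff.
      case He1: (e \in Rf (vf p)) => /=.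
        by move=> _; apply: (subsetP HRp).
      by apply: (subsetP HRp').
    move=> t /andP [H1 H2]; apply: Hpt; apply/andP; split => //.
    by rewrite /p' in H2; clear -H2; lia.
  rewrite /= HF (@W_split b p p'); last by clear -Hk; rewrite /p'; lia.
    2: by case/andP: Hp.
    2: exact: ltnW.
  apply/setP => x; rewrite !in_symdiff.
  by do ![case: (x \in _)].
have [p [Hp HpA Hpt [Ds [HDs HF]]]] := Inv n (leqnn n).
have Hpb : p = b + n.
  apply/eqP; rewrite eqn_leq; case/andP: Hp => _ -> /=.
  rewrite leqNgt; apply/negP => H.
  have := Hpt (b + n); rewrite H leqnn => /(_ isT).
  by rewrite (vf_modeq (_ : b + n = b %[mod n])) ?modnDr // Hb.
exists Ds; split => //.
rewrite HF Hpb W_full (vf_modeq (_ : b + n = b %[mod n])) ?modnDr //.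
by rewrite -/r -symdiffA symdiffvv symdiff0.
Qed.

End Decomp.

End CycleRep.

Lemma le_eq_k a k : (a < k) = false -> a < k.+1 -> a = k.
Proof. move=> H1 H2; move/negbT: H1; rewrite -leqNgt => H1; apply/eqP; rewrite eqn_leq H1 andbT; by rewrite -ltnS. Qed.

Definition cyc_ok n (vf : nat -> V) (gf : nat -> E) :=
  [/\ 1 < n, (forall i j, (vf i == vf j) = (i == j %[mod n])),
      (forall i j, (gf i == gf j) = (i == j %[mod n])) &
      (forall i, joins (gf i) (vf i) (vf i.+1))].

Lemma find_cycle (F : {set E}) : evenS F -> F != set0 ->
  exists n vf gf, cyc_ok n vf gf /\ CE n gf \subset F.
Proof.
move=> HF /set0Pn [e He].
set F' := F :\ e.
have HF'F : F' \subset F by apply: subsetDl.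
have := even_connect HF He => /connectP [p0 Hp0 Hl0].
move: Hl0; case: (shortenP Hp0) => p Hp Hu _ Hlast.
have Hk : 0 < size p.
  case: p Hp Hu Hlast => [|z p] //= _ _ He'.
  by move: (noloop e); rewrite -He' eqxx.
set x0 := src e.
set s := x0 :: p.
set k := size p.
set n := k.+1.
have Hsz : size s = n by [].
have Hnk : 1 < n by rewrite /n ltnS.
have Hn0 : 0 < n by [].
have Hadj : forall j, j < k -> adj src tgt F' (nth x0 s j) (nth x0 s j.+1).
  by move=> j Hj; move/(pathP x0): Hp => /(_ j Hj).
have Hlastk : nth x0 s k = tgt e by rewrite Hlast (nth_last x0 s).
pose pe x y := odflt e [pick f in F' | joins f x y].
have Hpe : forall x y, adj src tgt F' x y -> pe x y \in F' /\ joins (pe x y) x y.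
  move=> x y; rewrite adjE /pe; case: pickP => [f /andP [Hf Hj] _|H] /=; first by [].
  by case/existsP => f /andP [Hf Hj]; move: (H f); rewrite Hf Hj.
pose vf i := nth x0 s (i %% n).
pose gf i := if i %% n < k then pe (nth x0 s (i %% n)) (nth x0 s (i %% n).+1) else e.
have HmodS : forall i, i.+1 %% n = if i %% n < k then (i %% n).+1 else 0.
  move=> i; rewrite -addn1 -modnDml addn1.
  have := ltn_pmod i Hn0; rewrite /n ltnS leq_eqVlt; case/orP => [/eqP ->|H].
    by rewrite ltnn modnn.
  by rewrite H modn_small.
have Hgf_in : forall i, gf i \in F.
  move=> i; rewrite /gf; case: ifP => H //.
  by apply: (subsetP HF'F); case: (Hpe _ _ (Hadj _ H)).
exists n, vf, gf; split; last first.
  by apply/subsetP => f /imsetP [i _ ->]; apply: Hgf_in.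
split => //.
- by move=> i j; rewrite /vf nth_uniq // ?Hsz ltn_pmod.
- move=> i j; apply/eqP/eqP => [|H]; last by rewrite /gf H.
  rewrite /gf; have Ha := ltn_pmod i Hn0; have Hb := ltn_pmod j Hn0.
  case: ifP => Hai; case: ifP => Hbj.
  + move=> Hfe.
    have [_ J1] := Hpe _ _ (Hadj _ Hai); have [_ J2] := Hpe _ _ (Hadj _ Hbj).
    rewrite Hfe in J1; case: (joins_inj J1 J2) => [[/eqP E1 _]|[/eqP E1 /eqP E2]].
      by move: E1; rewrite nth_uniq ?Hsz // => /eqP.
    move: E1 E2; rewrite !nth_uniq ?Hsz // => /eqP E1 /eqP E2; exfalso.
    by clear -E1 E2; lia.
  + by move=> Hfe; have [Hin _] := Hpe _ _ (Hadj _ Hai); move: Hin; rewrite Hfe !inE eqxx.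
  + by move=> Hfe; have [Hin _] := Hpe _ _ (Hadj _ Hbj); move: Hin; rewrite -Hfe !inE eqxx.
  + by move=> _; apply/eqP; rewrite (le_eq_k Hai Ha) (le_eq_k Hbj Hb).
- move=> i; rewrite /gf /vf HmodS; case: ifP => H.
    by case: (Hpe _ _ (Hadj _ H)).
  rewrite (le_eq_k H (ltn_pmod i Hn0)).
  by rewrite Hlastk /= /joins !eqxx orbT.
Qed.


Definition good_cs (cs : seq ({set V} * {set E})) :=
  forall C, C \in cs -> is_cycle src tgt C.1 C.2 /\ fully_geodesic src tgt len C.1 C.2.

Lemma combine (Ds : seq {set E}) :
  (forall D, D \in Ds -> exists cs, good_cs cs /\ D = F2sum [seq C.2 | C <- cs]) ->
  exists cs, good_cs cs /\ F2sum Ds = F2sum [seq C.2 | C <- cs].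
Proof.
elim: Ds => [|D Ds IH] H; first by exists [::].
have [cs1 [H1 E1]] := H D (mem_head _ _).
have [cs2 [H2 E2]] : exists cs, good_cs cs /\ F2sum Ds = F2sum [seq C.2 | C <- cs].
  by apply: IH => D' HD'; apply: H; rewrite inE HD' orbT.
exists (cs1 ++ cs2); split.
  by move=> C; rewrite mem_cat => /orP [] ?; [apply: H1 | apply: H2].
by rewrite map_cat F2sum_cat /= E1 E2.
Qed.

Lemma key (F : {set E}) :
  (forall D, evenS D -> (glen len D < glen len F)%R ->
     exists cs, good_cs cs /\ D = F2sum [seq C.2 | C <- cs]) ->
  evenS F -> exists cs, good_cs cs /\ F = F2sum [seq C.2 | C <- cs].
Proof.
move=> IHF HF.
have fromDs : forall Ds, (forall D, D \in Ds -> evenS D /\ (glen len D < glen len F)%R) ->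
    F = F2sum Ds -> exists cs, good_cs cs /\ F = F2sum [seq C.2 | C <- cs].
  move=> Ds HDs ->; apply: combine => D HD; have [H1 H2] := HDs D HD; exact: IHF.
case: (eqVneq F set0) => [->|Hne]; first by exists [::].
have [n [vf [gf [[Hn Hv Hg Hj] HCF]]]] := find_cycle HF Hne.
have Hcyc := cycle_is Hn Hv Hg Hj.
case: (eqVneq (CE n gf) F) => [HCeq|HCne].
  case: (classic (fully_geodesic src tgt len (VC n vf) (CE n gf))) => Hfg.
    exists [:: (VC n vf, CE n gf)]; split; last by rewrite /= symdiff0 HCeq.
    by move=> C; rewrite inE => /eqP ->.
  have := Hcyc => /and3P [Hs Hc _].
  have [A [SV [SE [HAV HSs HSc HAS Hsmall]]]] := not_geo Hs Hc Hfg.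
  have [Ds [HDs HDe]] := cycle_decomp Hn Hv Hg Hj HAV HSs HSc HAS Hsmall.
  by apply: (fromDs Ds); rewrite -?HCeq.
have HCne0 : CE n gf != set0 by apply/set0Pn; exists (gf 0); apply: gf_in.
have HD0 : F :\: CE n gf != set0.
  apply/negP => /eqP H0; move/negP: HCne; apply; rewrite eqEsubset HCF /=.
  by rewrite -setD_eq0 H0.
apply: (fromDs [:: CE n gf; F :\: CE n gf]).
  move=> D; rewrite !inE => /orP [] /eqP ->; split.
  - exact: CE_even Hn Hv Hg Hj.
  - by rewrite (glen_split HCF) ltrDl glen_gt0.
  - have -> : F :\: CE n gf = symdiff F (CE n gf).
      apply/setP => x; rewrite in_symdiff !inE.
      by case Hx: (x \in CE n gf); rewrite ?(subsetP HCF _ Hx) /= ?addbF ?addbT ?andbT.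
    by apply: evenS_symdiff => //; exact: CE_even Hn Hv Hg Hj.
  - by rewrite (glen_split HCF) ltrDr glen_gt0.
rewrite /= symdiff0; apply/setP => x; rewrite in_symdiff !inE.
by case Hx: (x \in CE n gf); rewrite ?(subsetP HCF _ Hx).
Qed.

Lemma main_ind N (F : {set E}) :
  #|[set X : {set E} | (glen len X < glen len F)%R]| <= N ->
  evenS F -> exists cs, good_cs cs /\ F = F2sum [seq C.2 | C <- cs].
Proof.
elim: N F => [|N IH] F HN; apply: key => D HD HDF.
  by move: HN; rewrite leqn0 cards_eq0 => /eqP H0; move: (in_set0 D); rewrite -H0 inE HDF.
apply: IH HD; rewrite -ltnS; apply: leq_trans HN; apply: proper_card.
rewrite properEneq; apply/andP; split.
  apply/negP => /eqP H0; have : D \in [set X : {set E} | (glen len X < glen len F)%R] by rewrite inE.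
  by rewrite -H0 inE ltxx.
apply/subsetP => X; rewrite !inE => HX; exact: lt_trans HX HDF.
Qed.

Lemma cycle_even (VS : {set V}) (ES : {set E}) : is_cycle src tgt VS ES -> evenS ES.
Proof.
case/and3P => Hs _ /forallP Hd v; case: (boolP (v \in VS)) => Hv.
  by move/implyP: (Hd v) => /(_ Hv) /eqP; rewrite /par => ->.
rewrite /par /deg; have -> : [set e in ES | incident src tgt e v] = set0.
  apply/setP => e; rewrite !inE; apply/negP => /andP [He Hi].
  move/forallP: Hs => /(_ e) /implyP /(_ He) /andP [H1 H2].
  by move: Hi; rewrite /incident; case/orP => /eqP Hx; move: Hv; rewrite -Hx ?H1 ?H2.
by rewrite cards0.
Qed.

End Proof7.

Unset Implicit Arguments.

Theorem proposition7p1 (V E : finType) (src tgt : E -> V)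
  (noloop : forall e, src e != tgt e)
  (R : realFieldType) (len : E -> R) (len_pos : forall e, (0 < len e)%R) :
  forall F : {set E},
    in_cycle_space src tgt F <->
    exists cs : seq ({set V} * {set E}),
      (forall C, C \in cs ->
         is_cycle src tgt C.1 C.2 /\ fully_geodesic src tgt len C.1 C.2) /\
      F = F2sum [seq C.2 | C <- cs].
Proof.
move=> F; split.
  move/(evenS_cs src tgt F) => HF.
  exact: (@main_ind V E src tgt noloop R len len_pos _ F (leqnn _) HF).
case=> cs [Hcs ->]; apply/(evenS_cs src tgt); apply: evenS_F2sum => A /mapP [C HC ->].
by case: (Hcs C HC) => Hc _; apply: cycle_even Hc.
Qed.
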